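(* Let $K\subset\mathbb{R}^n$ be a closed convex set with diameter $d$, and let $r$ be the largest radius of a Euclidean ball fully contained in $K$. Then the LSE is minimax optimal (i.e. $\varepsilon_K(\sigma)\lesssim\varepsilon^*(\sigma)$) whenever $\sigma\lesssim r/\sqrt n$ or $\sigma\gtrsim d$.
   Context: Gaussian sequence model: $Y=\mu+\xi$, $\mu\in K$, $\xi\sim N(0,\sigma^2\mathbb{I}_n)$; LSE $\hat\mu=\operatorname{argmin}_{\nu\in K}\|Y-\nu\|_2^2$; $\varepsilon_K(\sigma)^2=\sup_{\mu\in K}\mathbb{E}_\mu\|\hat\mu-\mu\|_2^2$. $M(\eta,T)$: maximal cardinality of a subset of $T$ with pairwise distances $>\eta$; $M^{\mathrm{loc}}(\varepsilon)=\sup_{\theta\in K}M(\varepsilon/c^*,B(\theta,\varepsilon)\cap K)$ for a large absolute constant $c^*$ ($B$ the closed Euclidean ball); $\varepsilon^*(\sigma)=\sup\{\varepsilon:\varepsilon^2/\sigma^2\le\log M^{\mathrm{loc}}(\varepsilon)\}$, whose square is up to constants the minimax risk over $K$. $\lesssim,\gtrsim$ hide absolute constants. *)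

(* Defs.v *)
From HB Require Import structures.
From mathcomp Require Import all_boot all_order all_algebra.
From mathcomp Require Import all_classical all_reals all_analysis.
Set Implicit Arguments. Unset Strict Implicit. Unset Printing Implicit Defensive.
Import Order.TTheory GRing.Theory Num.Theory.
Local Open Scope classical_set_scope.
Local Open Scope ring_scope.

Section defs.
Variables (R : realType) (n : nat).
Implicit Types (x y : 'rV[R]_n) (K T : set 'rV[R]_n).

Definition enorm x : R := Num.sqrt (\sum_(i < n) x ord0 i ^+ 2).
Definition edist x y : R := enorm (x - y).

Definition eball x (rho : R) : set 'rV[R]_n := [set y | edist y x <= rho].

Definition convex_set_e K : Prop :=
  forall x y (t : R), K x -> K y -> 0 <= t <= 1 -> K (t *: x + (1 - t) *: y).

Definition diam K : \bar R :=
  ereal_sup [set (edist x y)%:E | x in K & y in K].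

Definition inradius K : \bar R :=
  ereal_sup [set rho%:E | rho in [set rho : R | 0 <= rho /\
                                   exists c, eball c rho `<=` K]].

Definition packing (eta : R) T : \bar R :=
  ereal_sup [set (size s)%:R%:E | s in [set s : seq 'rV[R]_n |
     uniq s /\ (forall x, x \in s -> T x) /\
     (forall x y, x \in s -> y \in s -> x != y -> eta < edist x y)]].

Definition Mloc (cstar : R) K (eps : R) : \bar R :=
  ereal_sup [set packing (eps / cstar) (eball theta eps `&` K) | theta in K].

Definition elog (a : \bar R) : \bar R :=
  match a with
  | r%:E => if (0 < r)%R then (ln r)%:E else -oo
  | +oo => +oo
  | -oo => -oo
  end%E.

Definition eps_star (cstar : R) K (sigma : R) : \bar R :=
  ereal_sup [set e%:E | e in [set e : R | 0 <= e /\
       ((e ^+ 2 / sigma ^+ 2)%:E <= elog (Mloc cstar K e))%E]].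

(* Gaussian expectation: integrate the coordinates listed in s against
   N(0, sigma^2), one at a time, starting from the vector x. *)
Fixpoint gauss_iter (sigma : R) (s : seq 'I_n)
    (f : 'rV[R]_n -> \bar R) (x : 'rV[R]_n) : \bar R :=
  match s with
  | [::] => f x
  | i :: s' => (\int[normal_prob 0 sigma]_t
        gauss_iter sigma s' f (\row_j (if j == i then t else x ord0 j)))%E
  end.

Definition gauss_exp (sigma : R) (f : 'rV[R]_n -> \bar R) : \bar R :=
  gauss_iter sigma (enum 'I_n) f 0.

Definition is_lse K (proj : 'rV[R]_n -> 'rV[R]_n) : Prop :=
  forall y, K (proj y) /\ forall nu, K nu -> edist y (proj y) ^+ 2 <= edist y nu ^+ 2.

Definition lse_risk2 K (proj : 'rV[R]_n -> 'rV[R]_n) (sigma : R) : \bar R :=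
  ereal_sup [set gauss_exp sigma (fun xi => (edist (proj (mu + xi)) mu ^+ 2)%:E)
            | mu in K].

End defs.

(* Main.v *)
Require Import Defs.
From HB Require Import structures.
From mathcomp Require Import all_boot all_order all_algebra.
From mathcomp Require Import all_classical all_reals all_analysis.
Import Order.TTheory GRing.Theory Num.Theory.
Import numFieldTopology.Exports.
Local Open Scope classical_set_scope.
Local Open Scope ring_scope.
From mathcomp Require Import measurable_realfun.
From mathcomp Require Import ring lra.

Section all.
Context {R : realType}.
Local Notation mu := (@lebesgue_measure R).

Local Open Scope ereal_scope.
Lemma normal_cov (s : R) (f : R -> \bar R) : (forall x, 0 <= f x) ->
  measurable_fun [set: R] f ->
  \int[normal_prob 0 s]_x f x = \int[mu]_x (f x * (normal_pdf 0 s x)%:E).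
Proof.
move=> f0 mf.
have numu := normal_prob_dominates 0 s.
rewrite -(Radon_Nikodym_SigmaFinite.change_of_variables numu)//.
apply: ae_eq_integral => //.
- apply: emeasurable_funM => //.
  exact: measurable_int (Radon_Nikodym_SigmaFinite.f_integrable _).
- apply: emeasurable_funM => //; apply/measurable_EFinP.
  exact: measurable_normal_pdf.
- apply: ae_eqe_mul2l; apply: integral_ae_eq => //.
  + exact: Radon_Nikodym_SigmaFinite.f_integrable.
  + by apply/measurable_EFinP; exact: measurable_normal_pdf.
  + move=> E _ mE; rewrite -Radon_Nikodym_SigmaFinite.f_integral//.
Qed.
Local Close Scope ereal_scope.

Lemma pdf_bound (s x : R) : 0 < s ->
  x ^+ 2 * normal_pdf 0 s x <= (16 / 3 * s ^+ 2) * normal_pdf 0 (2 * s) x.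
Proof.
move=> s0.
have s0' : s != 0 by rewrite gt_eqF.
have s20 : 2 * s != 0 by rewrite gt_eqF // mulr_gt0.
rewrite (normal_pdfE _ s0') (normal_pdfE _ s20) /normal_peak /normal_fun !subr0.
have -> : (2 * s) ^+ 2 * pi *+ 2 = 2 ^+ 2 * (s ^+ 2 * pi *+ 2).
  by rewrite exprMn -mulrA mulrnAr.
rewrite sqrtrM ?sqr_ge0 // sqrtr_sqr ger0_norm // invfM.
set P := (Num.sqrt (s ^+ 2 * pi *+ 2))^-1.
have P0 : 0 <= P by rewrite invr_ge0 sqrtr_ge0.
set a := x ^+ 2 / (s ^+ 2 * 8).
have s2 : 0 < s ^+ 2 by rewrite exprn_gt0.
have s2' : s ^+ 2 != 0 by rewrite gt_eqF.
have E1 : - x ^+ 2 / (s ^+ 2 *+ 2) = - a + - (3 * a).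
  rewrite /a -mulr_natr; field => //.
have E2 : - x ^+ 2 / ((2 * s) ^+ 2 *+ 2) = - a.
  rewrite /a -mulr_natr exprMn; field => //.
have E3 : x ^+ 2 = 8 * s ^+ 2 * a.
  rewrite /a; field => //.

rewrite E1 E2 E3 expRD.
have hb : 3 * a * expR (- (3 * a)) <= 1.
  rewrite expRN ler_pdivrMr ?expR_gt0 // mul1r.
  by apply: le_trans (expR_ge1Dx _); rewrite lerDr.
have hPv : 0 <= P * expR (- a) by rewrite mulr_ge0 // ltW // expR_gt0.
move: hb hPv; set u := expR (- (3 * a)); set v := expR (- a) => hb hPv.
have -> : 8 * s ^+ 2 * a * (P * (v * u)) = (8/3 * s ^+ 2) * (P * v) * (3 * a * u).
  by field.
have -> : 16 / 3 * s ^+ 2 * (2^-1 * P * v) = (8/3 * s ^+ 2) * (P * v) * 1.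
  by field.
apply: ler_wpM2l => //.
by rewrite mulr_ge0 // mulr_ge0 // ?sqr_ge0.
Qed.

Local Open Scope ereal_scope.
Lemma int_mono d (T : measurableType d) (m : {measure set T -> \bar R})
  (f g : T -> \bar R) : (forall x, 0 <= f x) -> (forall x, f x <= g x) ->
  \int[m]_x f x <= \int[m]_x g x.
Proof.
move=> f0 fg.
have g0 x : 0 <= g x by apply: le_trans (fg x).
rewrite !ge0_integralE //.
apply: le_ereal_sup => _ [h hf <-]; exists h => //= x.
apply: le_trans (hf x) _.
by rewrite /patch in_setT.
Qed.

Lemma gauss_mom2 (s : R) : (0 < s)%R ->
  \int[normal_prob 0 s]_x ((x ^+ 2)%:E) <= (6 * s ^+ 2)%:E.
Proof.
move=> s0.
rewrite normal_cov //; first last.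
  by apply/measurable_EFinP; exact: measurable_funX.
  by move=> x; rewrite lee_fin sqr_ge0.
apply: (@le_trans _ _ (\int[mu]_x ((16 / 3 * s ^+ 2)%:E * (normal_pdf 0 (2 * s) x)%:E))).
  apply: ge0_le_integral => //.
  - by move=> x _; rewrite mule_ge0 // lee_fin ?sqr_ge0 ?normal_pdf_ge0.
  - apply: emeasurable_funM; apply/measurable_EFinP; first exact: measurable_funX.
    exact: measurable_normal_pdf.
  - apply: emeasurable_funM; first exact: measurable_cst.
    by apply/measurable_EFinP; exact: measurable_normal_pdf.
  - by move=> x _; rewrite -!EFinM lee_fin pdf_bound.
rewrite ge0_integralZl_EFin //; last 3 first.
- by move=> x _; rewrite lee_fin normal_pdf_ge0.
- by apply/measurable_EFinP; exact: measurable_normal_pdf.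
- by rewrite mulr_ge0 // sqr_ge0.
rewrite integral_normal_pdf mule1 lee_fin ler_wpM2r ?sqr_ge0 //.
lra.
Qed.

Section iter.
Context {n : nat}.
Implicit Types (f g : 'rV[R]_n -> \bar R) (s : seq 'I_n).

Lemma iter_ge0 (sg : R) s f x : (forall y, 0 <= f y) -> 0 <= gauss_iter sg s f x.
Proof.
move=> f0; elim: s x => [|i s IH] x /=; first exact: f0.
by apply: integral_ge0 => t _; exact: IH.
Qed.

Lemma iter_mono (sg : R) s f g x : (forall y, 0 <= f y) -> (forall y, f y <= g y) ->
  gauss_iter sg s f x <= gauss_iter sg s g x.
Proof.
move=> f0 fg; elim: s x => [|i s IH] x /=; first exact: fg.
by apply: int_mono => t; [exact: iter_ge0|exact: IH].
Qed.

Lemma iter_cst (sg : R) s (c : R) x : gauss_iter sg s (fun _ => c%:E) x = c%:E.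
Proof.
elim: s x => [|i s IH] x //=.
under eq_integral do rewrite IH.
by rewrite integral_cst //= probability_setT mule1.
Qed.

Lemma iter_sq (sg : R) s x : (0 < sg)%R -> uniq s ->
  gauss_iter sg s (fun y => (\sum_i y ord0 i ^+ 2)%:E) x <=
  ((\sum_(i | i \notin s) x ord0 i ^+ 2) + 6 * sg ^+ 2 * (size s)%:R)%:E.
Proof.
move=> sg0; elim: s x => [|i s IH] x /=.
  by move=> _; rewrite mulr0 addr0 lee_fin le_eqVlt; apply/orP; left; apply/eqP/eq_bigl.
move=> /andP[iNs us].
set c := (\sum_(j | j \notin i :: s) x ord0 j ^+ 2 + 6 * sg ^+ 2 * (size s)%:R)%R.
apply: (@le_trans _ _ (\int[normal_prob 0 sg]_t ((t ^+ 2)%:E + c%:E))).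
  apply: int_mono => t.
    by apply: iter_ge0 => y; rewrite lee_fin sumr_ge0 // => j _; rewrite sqr_ge0.
  apply: le_trans (IH _ us) _; rewrite -EFinD lee_fin /c addrA lerD2r.
  rewrite (bigD1 i) //= mxE eqxx lerD2l le_eqVlt; apply/orP; left; apply/eqP.
  apply: eq_big => j; first by rewrite in_cons negb_or andbC.
  by rewrite mxE => /andP[_ /negbTE ->].
have c0 : (0 <= c)%R.
  rewrite /c addr_ge0 // ?sumr_ge0 // => [j _|]; first by rewrite sqr_ge0.
  by rewrite mulr_ge0 // mulr_ge0 // sqr_ge0.
have h1 : forall t : R, [set: R] t -> 0 <= (t ^+ 2)%:E.
  by move=> t _; rewrite lee_fin sqr_ge0.
have h2 : measurable_fun [set: R] (fun t : R => (t ^+ 2)%:E).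
  by apply/measurable_EFinP; exact: measurable_funX.
have h3 : forall t : R, [set: R] t -> 0 <= c%:E by move=> t _; rewrite lee_fin.
rewrite ge0_integralD //.
rewrite integral_cst //= probability_setT mule1.
have hm := @gauss_mom2 sg sg0.
apply: (le_trans (leeD hm (lexx c%:E))).
rewrite -EFinD lee_fin /c -[(size s).+1]addn1 natrD mulrDr mulr1 le_eqVlt; apply/orP; left.
by apply/eqP; ring.
Qed.
End iter.
Local Close Scope ereal_scope.

Section geom.
Context {n : nat}.
Implicit Types (a b x y : 'rV[R]_n).

Definition sq x := \sum_i x ord0 i ^+ 2.
Definition dot a b := \sum_i a ord0 i * b ord0 i.

Lemma sq_ge0 x : 0 <= sq x.
Proof. by rewrite sumr_ge0 // => i _; rewrite sqr_ge0. Qed.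

Lemma enorm2 x : Defs.enorm x ^+ 2 = sq x.
Proof. by rewrite /Defs.enorm sqr_sqrtr // sq_ge0. Qed.

Lemma edist2 x y : Defs.edist x y ^+ 2 = sq (x - y).
Proof. exact: enorm2. Qed.

Lemma sq_expand a b (t : R) : sq (a - t *: b) = sq a - 2 * t * dot a b + t ^+ 2 * sq b.
Proof.
rewrite /sq /dot !mulr_sumr -sumrB -big_split /=; apply: eq_bigr => i _.
rewrite !mxE; ring.
Qed.

Lemma sqN x : sq (- x) = sq x.
Proof. by apply: eq_bigr => i _; rewrite mxE sqrrN. Qed.

Lemma lse_var K P y k : convex_set_e K -> is_lse K P -> K k ->
  dot (y - P y) (k - P y) <= 0.
Proof.
move=> cK hP Kk.
set a := y - P y; set b := k - P y.
have key t : 0 <= t <= 1 -> 2 * t * dot a b <= t ^+ 2 * sq b.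
  move=> t01.
  have Kz := cK k (P y) t Kk (hP y).1 t01.
  have := (hP y).2 _ Kz; rewrite !edist2.
  have -> : y - (t *: k + (1 - t) *: P y) = a - t *: b.
    by rewrite /a /b scalerBr scalerBl scale1r; apply/rowP => i; rewrite !mxE; ring.
  rewrite sq_expand; lra.
rewrite leNgt; apply/negP => D0.
have h1 : 2 * dot a b <= sq b.
  by have := key 1; rewrite mulr1 expr1n mul1r ler01 lexx; apply.
have B0 : 0 < sq b by have := h1; lra.
pose t := dot a b / (2 * sq b).
have t0 : 0 < t by rewrite divr_gt0 // mulr_gt0.
have t1 : t <= 1.
  by rewrite ler_pdivrMr ?mulr_gt0 // mul1r; have := h1; lra.
have := key t; rewrite (ltW t0) t1 => /(_ isT).
have -> : t ^+ 2 * sq b = t * (dot a b / 2).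
  rewrite /t; field; rewrite gt_eqF //.
nra.
Qed.

Lemma lse_contr K P mu xi : convex_set_e K -> is_lse K P -> K mu ->
  Defs.edist (P (mu + xi)) mu ^+ 2 <= sq xi.
Proof.
move=> cK hP Kmu.
have := @lse_var K P (mu + xi) mu cK hP Kmu.
set a := _ - _; set b := _ - _ => hv.
have e1 : xi = a - 1 *: b.
  by rewrite /a /b scale1r; apply/rowP => i; rewrite !mxE; ring.
rewrite edist2 {2}e1 sq_expand.
have -> : P (mu + xi) - mu = - b by rewrite /b opprB.
rewrite sqN expr1n mul1r mulr1.
have := sq_ge0 a; lra.
Qed.
End geom.

Section code.
Context {n : nat}.
Local Close Scope classical_set_scope.
Local Notation T := {ffun 'I_n -> bool}.

Definition ham (a b : T) : nat := #|[set i | a i != b i]|.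

Lemma hamC a b : ham a b = ham b a.
Proof. by rewrite /ham; apply: eq_card => i; rewrite !inE eq_sym. Qed.

Lemma ham0 a : ham a a = 0%N.
Proof. by rewrite /ham; apply/eqP; rewrite cards_eq0; apply/eqP/setP => i; rewrite !inE eqxx. Qed.

Lemma sum_pow_ham (x : R) (s : T) : \sum_(v : T) x ^+ ham v s = (1 + x) ^+ n.
Proof.
have -> : (1 + x) ^+ n = \prod_(i : 'I_n) \sum_(b : bool) (if b != s i then x else 1).
  transitivity (\prod_(i : 'I_n) (1 + x)); first by rewrite prodr_const card_ord.
  by apply: eq_bigr => i _; rewrite big_bool /=; case: (s i) => /=; rewrite addrC.
rewrite bigA_distr_bigA /=; apply: eq_bigr => v _.
by rewrite /ham -prodr_const big_mkcond /=; apply: eq_bigr => i _; rewrite inE.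
Qed.

Definition good (t : nat) (S : {set T}) :=
  [forall a in S, forall b in S, (a != b) ==> (t < ham a b)%N].

Lemma goodP t (S : {set T}) : reflect (forall a b, a \in S -> b \in S -> a != b -> (t < ham a b)%N) (good t S).
Proof.
apply: (iffP forallP) => [h a b aS bS ab|h a].
  by move: (h a); rewrite aS /= => /forallP /(_ b); rewrite bS /= => /implyP; apply.
apply/implyP => aS; apply/forallP => b; apply/implyP => bS; apply/implyP; exact: h.
Qed.

Lemma code_count (t : nat) : exists S : {set T}, good t S /\
  (2 ^ n)%:R <= #|S|%:R * (4 ^+ t * (5 / 4) ^+ n) :> R.
Proof.
have g0 : good t (finset.set0 : {set T}) by apply/forallP => a; rewrite inE.
case: (arg_maxnP (fun S : {set T} => #|S|) g0) => S gS maxS.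
exists S; split => //.
have cover v : [exists s in S, (ham v s <= t)%N].
  have [//|/existsPn hn] := boolP [exists s in S, (ham v s <= t)%N].
  have hlt s : s \in S -> (t < ham v s)%N.
    by move=> sS; have := hn s; rewrite sS /= ltnNge.
  have vS : v \notin S by apply/negP => /hlt; rewrite ham0.
  have gS' : good t (v |: S).
    apply/goodP => a b; rewrite !in_setU1 => /predU1P[->|aS] /predU1P[->|bS].
    - by rewrite eqxx.
    - by move=> _; apply: hlt.
    - by move=> _; rewrite hamC; apply: hlt.
    - by apply: (goodP _ _ gS).
  by have := maxS _ gS'; rewrite cardsU1 vS /= add1n ltnn.
have h1 v : 1 <= \sum_(s in S) 4 ^+ t * (4^-1) ^+ ham v s :> R.
  case/existsP: (cover v) => s /andP[sS hs].
  rewrite (bigD1 s) //=.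
  have hr : 0 <= \sum_(u in S | u != s) 4 ^+ t * (4^-1) ^+ ham v u :> R.
    by apply: sumr_ge0 => u _; rewrite mulr_ge0 // exprn_ge0 // invr_ge0.
  suff : 1 <= 4 ^+ t * (4^-1) ^+ ham v s :> R by lra.
  apply: (@le_trans _ _ (4 ^+ t * 4^-1 ^+ t)).
    by rewrite -exprMn mulfV // expr1n.
  apply: ler_wpM2l; first by rewrite exprn_ge0.
  apply: ler_wiXn2l; [by rewrite invr_ge0 | by rewrite invf_le1 // ler1n | exact: hs].
have h2 : \sum_(v : T) (1 : R) <= \sum_(v : T) \sum_(s in S) 4 ^+ t * (4^-1) ^+ ham v s.
  by apply: (@ler_sum R T (index_enum T) (fun _ => true) (fun _ => 1)) => v _; exact: h1.
have e2 : (2 ^ n)%:R = \sum_(v : T) (1 : R).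
  by rewrite sumr_const card_ffun card_bool card_ord natrX.
rewrite e2; apply: (le_trans h2).
rewrite exchange_big /= mulr_natl -sumr_const; apply: ler_sum => s _.
rewrite -mulr_sumr sum_pow_ham le_eqVlt; apply/orP; left; apply/eqP.
by congr (_ * (_ ^+ _)); field.
Qed.

Lemma ln_le_sub1 (y : R) : 0 < y -> ln y <= y - 1.
Proof.
move=> y0; have := expR_ge1Dx (ln y); rewrite lnK ?posrE //; lra.
Qed.

Lemma l2 : 1 / 2 <= ln (2 : R).
Proof.
have h : (0 : R) < 2^-1 by rewrite invr_gt0.
have := ln_le_sub1 _ h; rewrite lnV ?posrE //.
lra.
Qed.

Lemma l54 : ln (5 / 4 : R) <= 1 / 4.
Proof.
have h : (0 : R) < 5 / 4 by rewrite divr_gt0.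
have := ln_le_sub1 _ h.
lra.
Qed.

Lemma l4 : ln (4 : R) <= 3.
Proof.
have h : (0 : R) < 4 by rewrite ltr0n.
have := ln_le_sub1 _ h.
lra.
Qed.

Lemma l4p : 0 <= ln (4 : R).
Proof. by rewrite ln_ge0 // ler1n. Qed.
Lemma code_ln : exists S : {set T}, good (n %/ 16) S /\ (0 < #|S|)%N /\
  n%:R / 16 <= ln (#|S|%:R : R).
Proof.
have [S [gS hS]] := code_count (n %/ 16).
set t := (n %/ 16)%N in hS *.
set N := (#|S|%:R : R) in hS *.
have p2 : 0 < (2 ^ n)%:R :> R by rewrite ltr0n expn_gt0.
have K0 : 0 < 4 ^+ t * (5 / 4) ^+ n :> R by rewrite mulr_gt0 // exprn_gt0.
have N0 : 0 < N.
  rewrite -(pmulr_lgt0 _ K0); exact: lt_le_trans hS.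
exists S; split => //; split; first by rewrite -(ltr0n R).
have := hS; rewrite -ler_ln ?posrE // ?mulr_gt0 //.
rewrite !lnM ?posrE // ?mulr_gt0 ?exprn_gt0 // natrX !lnXn //.
have ht : t%:R * 16 <= n%:R :> R.
  by rewrite -natrM ler_nat leq_trunc_div.
have hn : 0 <= n%:R :> R by rewrite ler0n.
have ht0 : 0 <= t%:R :> R by rewrite ler0n.
have a : (1 / 2) * (n%:R : R) <= ln (2 : R) * (n%:R : R) := ler_wpM2r hn l2.
have b : ln (5 / 4 : R) * (n%:R : R) <= (1 / 4) * (n%:R : R) := ler_wpM2r hn l54.
have c : ln (4 : R) * (t%:R : R) <= 3 * (t%:R : R) := ler_wpM2r ht0 l4.
move=> H.
rewrite -(mulr_natr (ln (2 : R))) -(mulr_natr (ln (4 : R))) -(mulr_natr (ln (5 / 4 : R))) in H.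
lra.
Qed.
End code.

End all.

Section main.
Context {R : realType}.

Section helpers.
Context {n : nat}.
Implicit Types (x y : 'rV[R]_n).

Lemma edist_ge0 x y : 0 <= Defs.edist x y.
Proof. exact: sqrtr_ge0. Qed.

Lemma edist_sq_le x y a : 0 <= a -> sq (x - y) <= a ^+ 2 -> Defs.edist x y <= a.
Proof.
move=> a0 h; rewrite -(ger0_norm a0) -sqrtr_sqr /Defs.edist /Defs.enorm.
by rewrite ler_sqrt // sqr_ge0.
Qed.

Lemma edist_sq_gt x y a : 0 <= a -> a ^+ 2 < sq (x - y) -> a < Defs.edist x y.
Proof.
move=> a0 h; rewrite -(ger0_norm a0) -sqrtr_sqr /Defs.edist /Defs.enorm.
by rewrite ltr_sqrt // (le_lt_trans _ h) // sqr_ge0.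
Qed.

Lemma edistC x y : Defs.edist x y = Defs.edist y x.
Proof.
rewrite /Defs.edist /Defs.enorm; congr Num.sqrt; apply: eq_bigr => i _.
by rewrite !mxE; ring.
Qed.

Lemma edist0 x : Defs.edist x x = 0.
Proof.
rewrite /Defs.edist /Defs.enorm subrr -[RHS]sqrtr0; congr Num.sqrt.
by apply: big1 => i _; rewrite mxE expr0n.
Qed.

Local Open Scope ereal_scope.

Lemma elog_ge (m : R) (M : \bar R) : (0 < m)%R -> m%:E <= M -> (ln m)%:E <= elog M.
Proof.
move=> m0; case: M => [r| |] /=.
- rewrite lee_fin => mr; have r0 : (0 < r)%R by apply: lt_le_trans mr.
  by rewrite r0 lee_fin ler_ln ?posrE.
- move=> _; exact: leey.
- by rewrite leeNy_eq.
Qed.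

Lemma Mloc_ge (cst : R) (K : set 'rV[R]_n) (e : R) th (s : seq 'rV[R]_n) :
  K th -> uniq s -> (forall x, x \in s -> (eball th e `&` K) x) ->
  (forall x y, x \in s -> y \in s -> x != y -> (e / cst < Defs.edist x y)%R) ->
  ((size s)%:R)%:E <= Mloc cst K e.
Proof.
move=> Kth us sin spw.
apply: (@le_trans _ _ (packing (e / cst) (eball th e `&` K))).
  by apply: ereal_sup_ubound; exists s.
by apply: ereal_sup_ubound; exists th.
Qed.

Lemma eps_ge (cst : R) (K : set 'rV[R]_n) (sg e : R) : (0 <= e)%R ->
  ((e ^+ 2 / sg ^+ 2)%:E <= elog (Mloc cst K e)) -> e%:E <= eps_star cst K sg.
Proof. by move=> e0 h; apply: ereal_sup_ubound; exists e. Qed.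

Lemma risk_ub (K : set 'rV[R]_n) P (sg : R) (B : \bar R) :
  (forall mu, K mu -> gauss_exp sg (fun xi => ((Defs.edist (P (mu + xi)) mu) ^+ 2)%:E) <= B) ->
  lse_risk2 K P sg <= B.
Proof. by move=> h; apply: ub_ereal_sup => _ [mu Kmu <-]; exact: h. Qed.

Lemma final_step (rk eps : \bar R) (B e : R) : rk <= B%:E -> e%:E <= eps -> (0 <= e)%R ->
  (B <= 100 * e ^+ 2)%R -> rk <= 100%:E * (eps * eps).
Proof.
move=> hr he e0 hB.
apply: (le_trans hr); apply: (@le_trans _ _ (100%:E * (e%:E * e%:E))).
  by rewrite -!EFinM lee_fin -expr2.
apply: lee_wpmul2l; first by rewrite lee_fin.
by apply: lee_pmul; rewrite ?lee_fin.
Qed.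

End helpers.
Arguments final_step {rk eps B e}.
Arguments eps_ge {n cst K sg e}.

Local Open Scope ereal_scope.
Lemma diam_regime (cst : R) n (K : set 'rV[R]_n) (d sg : R) P :
  (2 <= cst)%R -> K !=set0 -> convex_set_e K -> diam K = d%:E -> (0 < sg)%R ->
  is_lse K P -> (2 * d <= sg)%R ->
  lse_risk2 K P sg <= 100%:E * (eps_star cst K sg * eps_star cst K sg).
Proof.
move=> hc [x0 Kx0] cK hd sg0 hP hreg.
have hdist x y : K x -> K y -> (Defs.edist x y <= d)%R.
  move=> Kx Ky; rewrite -lee_fin -hd; apply: ereal_sup_ubound.
  by exists x => //; exists y.
have d0 : (0 <= d)%R by rewrite -(edist0 x0); exact: hdist.
have hrisk : lse_risk2 K P sg <= (d ^+ 2)%:E.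
  apply: risk_ub => mu Kmu; rewrite /gauss_exp.
  apply: (@le_trans _ _ (gauss_iter sg (enum 'I_n) (fun _ => (d ^+ 2)%:E) 0)).
    apply: iter_mono => y; first by rewrite lee_fin sqr_ge0.
    rewrite lee_fin expr2 [(d ^+ 2)%R]expr2.
    by apply: ler_pM; rewrite ?edist_ge0 //; apply: hdist => //; exact: (hP _).1.
  by rewrite iter_cst.
have [d00|dpos] : d = 0%R \/ (0 < d)%R.
  by move: d0; rewrite le_eqVlt => /orP[/eqP<-|->]; [left|right].
  subst d.
  apply: (final_step hrisk (eps_ge (lexx 0%R) _) (lexx 0%R)); last first.
    by rewrite expr0n /= mulr0.
  rewrite expr0n /= mul0r.
  have h1 : (ln (1 : R))%:E <= elog (Mloc cst K 0).
    apply: elog_ge => //.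
    apply: le_trans (Mloc_ge cst K 0 x0 [:: x0] Kx0 isT _ _) => //.
    - move=> z; rewrite inE => /eqP ->; split => //.
      by rewrite /eball /= edist0.
    - by move=> u v; rewrite !inE => /eqP -> /eqP ->; rewrite eqxx.
  by rewrite ln1 in h1.
have : (d / 2)%:E < diam K by rewrite hd lte_fin; lra.
case/ereal_sup_gt => _ [x Kx [y Ky <-]]; rewrite lte_fin => hxy.
have xy : x != y.
  by apply/eqP => exy; move: hxy; rewrite exy edist0; lra.
have hdc : (d / cst <= d / 2)%R.
  rewrite ler_pdivrMr ?(lt_le_trans _ hc) //.
  have : (d / 2 * 2 <= d / 2 * cst)%R by apply: ler_wpM2l => //; lra.
  have -> : (d / 2 * 2 = d)%R by field.
  by [].
have hM : (2%:R)%:E <= Mloc cst K d.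
  apply: (Mloc_ge cst K d x [:: x; y] Kx).
  - by rewrite /= inE xy.
  - move=> z; rewrite !inE => /orP[/eqP ->|/eqP ->]; split => //.
      by rewrite /eball /= edist0.
    by rewrite /eball /=; apply: hdist.
  - move=> u v; rewrite !inE => /orP[/eqP ->|/eqP ->] /orP[/eqP ->|/eqP ->];
      rewrite ?eqxx // => _.
      by apply: le_lt_trans hdc _.
    by rewrite edistC; apply: le_lt_trans hdc _.
apply: (final_step hrisk (eps_ge d0 _) d0); last first.
  have := sqr_ge0 d; lra.
apply: le_trans (elog_ge _ _ _ hM) => //.
rewrite lee_fin; apply: le_trans (l2 (R:=R)).
have sg2 : (0 < sg ^+ 2)%R by rewrite exprn_gt0.
rewrite ler_pdivrMr //.
have h4 : ((2 * d) * (2 * d) <= sg * sg)%R by apply: ler_pM => //; lra.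
rewrite !expr2; lra.
Qed.

Lemma sq_scale n (k : R) (x : 'rV[R]_n) : (sq (k *: x) = k ^+ 2 * sq x)%R.
Proof. by rewrite /sq mulr_sumr; apply: eq_bigr => i _; rewrite mxE exprMn. Qed.

Lemma sq0 n : (sq (0 : 'rV[R]_n) = 0)%R.
Proof. by rewrite /sq big1 // => i _; rewrite mxE expr0n. Qed.

Lemma small_regime (cst : R) n (K : set 'rV[R]_n) (r sg : R) P :
  (2 <= cst)%R -> convex_set_e K -> inradius K = r%:E -> (0 < sg)%R ->
  is_lse K P -> (sg <= 1 * r / Num.sqrt n%:R)%R ->
  lse_risk2 K P sg <= 100%:E * (eps_star cst K sg * eps_star cst K sg).
Proof.
move=> hc cK hr sg0 hP hs.
have n0 : (0 < n)%N.
  rewrite lt0n; apply/negP => /eqP n0; move: hs; rewrite n0 mulr0n sqrtr0 invr0 mulr0.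
  by rewrite leNgt sg0.
set sn := Num.sqrt (n%:R : R).
have sn0 : (0 < sn)%R by rewrite sqrtr_gt0 ltr0n.
have sn2 : (sn ^+ 2 = n%:R)%R by rewrite sqr_sqrtr // ler0n.
have hr1 : (sg * sn <= r)%R by rewrite mul1r ler_pdivlMr in hs.
have r0 : (0 < r)%R := lt_le_trans (mulr_gt0 sg0 sn0) hr1.
have : (r / 2)%:E < inradius K by rewrite hr lte_fin; lra.
case/ereal_sup_gt => _ [rho [rho0 [c hcK]] <-]; rewrite lte_fin => hrho.
set e := (sg * sn / 4)%R.
have e0 : (0 < e)%R by rewrite /e divr_gt0 // mulr_gt0.
have erho : (e <= rho)%R by rewrite /e; lra.
have Kc : K c by apply: hcK; rewrite /eball /= edist0.
have [S [gS [S0 hln]]] := code_ln (R:=R) (n:=n).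
pose w (v : {ffun 'I_n -> bool}) : 'rV[R]_n := \row_i (if v i then 1 else -1)%R.
pose p v := (c + (e / sn) *: w v)%R.
have sqw v : (sq (w v) = n%:R)%R.
  transitivity (\sum_(i < n) (1 : R))%R; last by rewrite sumr_const card_ord.
  by apply: eq_bigr => i _; rewrite mxE; case: (v i); rewrite ?sqrrN expr1n.
have hpc v : (sq (p v - c) = e ^+ 2)%R.
  rewrite /p addrC addKr sq_scale sqw expr_div_n sn2; field.
  by rewrite pnatr_eq0 -lt0n.
have hpp u v : (sq (p u - p v) = (e / sn) ^+ 2 * (4 * (ham u v)%:R))%R.
  have -> : (p u - p v = (e / sn) *: (w u - w v))%R.
    by apply/rowP => i; rewrite !mxE; ring.
  rewrite sq_scale; congr (_ * _)%R.
  rewrite /ham mulr_natr -sumr_const big_mkcond /=; apply: eq_bigr => i _.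
  by rewrite inE !mxE; case: (u i); case: (v i) => /=; ring.
have hpos u v : u \in S -> v \in S -> u != v ->
    (e / cst < Defs.edist (p u) (p v))%R.
  move=> uS vS uv.
  have ht := goodP _ _ gS u v uS vS uv.
  have hh : (n%:R < 16 * (ham u v)%:R :> R)%R.
    rewrite -natrM ltr_nat; apply: (leq_trans (ltn_ceil n (isT : (0 < 16)%N))).
    by rewrite mulnC leq_mul2l.
  have cst0 : (0 < cst)%R by apply: lt_le_trans hc.
  apply: edist_sq_gt; first by rewrite divr_ge0 // ltW.
  rewrite hpp (expr_div_n e cst) (expr_div_n e sn) sn2.
  have e2 : (0 < e ^+ 2)%R by rewrite exprn_gt0.
  have hA : (e ^+ 2 / cst ^+ 2 <= e ^+ 2 / 4)%R.
    apply: ler_wpM2l; first exact: ltW.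
    rewrite lef_pV2 ?posrE ?exprn_gt0 //.
    have : (2 * 2 <= cst * cst)%R by apply: ler_pM.
    by rewrite expr2; lra.
  apply: (le_lt_trans hA).
  have nR : (0 < n%:R :> R)%R by rewrite ltr0n.
  rewrite -[X in (_ < X)%R]mulrA (ltr_pM2l e2) mulrC ltr_pdivlMr //.
  lra.
have hin v : (eball c e `&` K) (p v).
  have hd : (Defs.edist (p v) c <= e)%R.
    by apply: edist_sq_le; [exact: ltW | rewrite hpc].
  split => //; apply: hcK; rewrite /eball /=; exact: le_trans erho.
have hinj : {in enum S &, injective p}.
  move=> u v; rewrite !mem_enum => uS vS puv; apply/eqP; apply/negP => /negP uv.
  have := hpos u v uS vS uv; rewrite puv edist0 => h.
  have : (0 <= e / cst)%R by rewrite divr_ge0 // ltW // (lt_le_trans _ hc).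
  lra.
have hM : ((#|S|)%:R)%:E <= Mloc cst K e.
  rewrite cardE -(size_map p).
  apply: (Mloc_ge cst K e c _ Kc).
  - by rewrite map_inj_in_uniq // enum_uniq.
  - by move=> x /mapP[v _ ->].
  - move=> x y /mapP[u uS ->] /mapP[v vS ->] puv.
    rewrite mem_enum in uS; rewrite mem_enum in vS.
    apply: hpos => //; apply/negP => /eqP uv; move: puv; rewrite uv eqxx.
    by [].
have hrisk : lse_risk2 K P sg <= (6 * sg ^+ 2 * n%:R)%:E.
  apply: risk_ub => mu Kmu; rewrite /gauss_exp.
  apply: (@le_trans _ _ (gauss_iter sg (enum 'I_n) (fun y => (\sum_i y ord0 i ^+ 2)%:E) 0)).
    apply: iter_mono => y; first by rewrite lee_fin sqr_ge0.
    by rewrite lee_fin; exact: (lse_contr K P mu y cK hP Kmu).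
  apply: le_trans (iter_sq sg (enum 'I_n) 0 sg0 (enum_uniq _)) _.
  rewrite big_pred0 ?add0r ?size_enum_ord // => i.
  by rewrite mem_enum.
have S0' : (0 < (#|S|)%:R :> R)%R by rewrite ltr0n.
apply: (final_step hrisk (eps_ge (ltW e0) _) (ltW e0)); last first.
  rewrite /e !exprMn sn2.
  have : (0 <= sg ^+ 2 * n%:R :> R)%R by rewrite mulr_ge0 ?sqr_ge0 ?ler0n.
  lra.
apply: le_trans (elog_ge _ _ S0' hM); rewrite lee_fin.
apply: le_trans hln; rewrite le_eqVlt; apply/orP; left; apply/eqP.
rewrite /e !exprMn sn2; field.
by rewrite gt_eqF // exprn_gt0.
Qed.

End main.

Local Open Scope classical_set_scope.
Local Open Scope ring_scope.

Theorem mainTheorem18 (R : realType) :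
  exists c0 : R, 0 < c0 /\
  forall cstar : R, c0 <= cstar ->
  exists C c1 c2 : R, [/\ 0 < C, 0 < c1 & 0 < c2] /\
  forall (n : nat) (K : set 'rV[R]_n) (d r sigma : R)
         (proj : 'rV[R]_n -> 'rV[R]_n),
    K !=set0 -> closed K -> convex_set_e K ->
    diam K = d%:E -> inradius K = r%:E ->
    0 < sigma ->
    is_lse K proj ->
    (sigma <= c1 * r / Num.sqrt n%:R \/ c2 * d <= sigma) ->
    (lse_risk2 K proj sigma <= C%:E * (eps_star cstar K sigma * eps_star cstar K sigma))%E.
Proof.
exists 2; split; first by rewrite ltr0n.
move=> cstar hc.
exists 100, 1, 2; split; first by split; rewrite ?ltr0n ?ltr01.
move=> n K d r sigma proj K0 Kcl cK hd hr hs hP [h|h].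
- exact: (small_regime _ _ _ _ _ _ hc cK hr hs hP h).
- exact: (diam_regime _ _ _ _ _ _ hc K0 cK hd hs hP h).
Qed.
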